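(* Let $n \ge 3$ be an integer and let $I$ be a degree-based topological index with coefficients $c_{12},c_{13},c_{22},c_{23},c_{33}$. Define $c'_{12} = c_{12}-4c_{22}+3c_{23}$, $c'_{13} = c_{13}-3c_{22}+2c_{23}$, $c'_{33} = c_{22}-2c_{23}+c_{33}$. If $\max\{c'_{12},c'_{13}\}<\min\{0,-c'_{33}\}$, then the cycle $C_n$ on $n$ vertices is, up to isomorphism, the only graph in $\mathcal{G}_3(n,n)$ that maximizes $I$.
   Context: For integers $n,m$, $\mathcal{G}_3(n,m)$ denotes the set of simple connected undirected graphs (chemical graphs) with $n$ vertices, $m$ edges and maximum degree at most $3$; in particular $\mathcal{G}_3(n,n)$ is the set of connected unicyclic graphs of order $n$ with maximum degree at most $3$. For a graph $G$ and $1\le i\le j$, an $ij$-edge is an edge whose endpoints have degrees $i$ and $j$, and $m_{ij}$ denotes the number of $ij$-edges of $G$. A degree-based topological index $I$ is a function on chemical graphs of order $n\ge 3$ of the form $I(G)=c_{12}m_{12}+c_{13}m_{13}+c_{22}m_{22}+c_{23}m_{23}+c_{33}m_{33}$, where the $c_{ij}$ are fixed real numbers. *)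

(* Defs.v *)
From HB Require Import structures.
From mathcomp Require Import all_boot all_order all_algebra fingroup perm.
Set Implicit Arguments. Unset Strict Implicit. Unset Printing Implicit Defensive.
Import Order.TTheory GRing.Theory Num.Theory.

Definition simple_graph n (g : rel 'I_n) : Prop :=
  irreflexive g /\ symmetric g.

Definition connected_graph n (g : rel 'I_n) : Prop :=
  forall u v : 'I_n, connect g u v.

Definition deg n (g : rel 'I_n) (v : 'I_n) : nat := #|[set u | g v u]|.

(* unordered edges, each represented once as (u,v) with u < v *)
Definition edges n (g : rel 'I_n) : {set 'I_n * 'I_n} :=
  [set p : 'I_n * 'I_n | (p.1 < p.2)%N && g p.1 p.2].

Definition num_edges n (g : rel 'I_n) : nat := #|edges g|.

(* G_3(n,m): simple connected graphs of order n, size m, max degree <= 3 *)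
Definition chemical n (m : nat) (g : rel 'I_n) : Prop :=
  [/\ simple_graph g, connected_graph g, num_edges g = m
    & forall v, (deg g v <= 3)%N].

Definition mij n (g : rel 'I_n) (i j : nat) : nat :=
  #|[set p in edges g | ((deg g p.1 == i) && (deg g p.2 == j))
                     || ((deg g p.1 == j) && (deg g p.2 == i))]|.

Definition topo_index (R : realFieldType) (c12 c13 c22 c23 c33 : R)
  n (g : rel 'I_n) : R :=
  (c12 *+ mij g 1 2 + c13 *+ mij g 1 3 + c22 *+ mij g 2 2
   + c23 *+ mij g 2 3 + c33 *+ mij g 3 3)%R.

Definition cycle_graph n : rel 'I_n :=
  fun i j => ((j : nat) == i.+1 %% n) || ((i : nat) == j.+1 %% n).

Definition isomorphic n (g h : rel 'I_n) : Prop :=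
  exists f : {perm 'I_n}, forall i j, g i j = h (f i) (f j).

(* Main.v *)
Require Import Defs.
From HB Require Import structures.
From mathcomp Require Import all_boot all_order all_algebra fingroup perm.
From mathcomp Require Import zify ring lra.
Import Order.TTheory GRing.Theory Num.Theory.
Local Open Scope ring_scope.

Lemma closedP n (g : rel 'I_n) (P : 'I_n -> Prop) :
  (forall x y, P x -> g x y -> P y) -> forall x y, P x -> connect g x y -> P y.
Proof.
move=> cl x y Px /connectP [p pth ->].
elim: p x Px pth => [|z p IH] x Px //= /andP[gxz pth].
exact: IH (cl _ _ Px gxz) pth.
Qed.

Lemma hs (R : numDomainType) n (g : rel 'I_n) (F : 'I_n -> R) :
  simple_graph g ->
  \sum_(e in edges g) (F e.1 + F e.2) = \sum_v (deg g v)%:R * F v.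
Proof.
case=> irr sym.
have L1 v : (deg g v)%:R * F v = \sum_u (if g v u then F v else 0).
  rewrite -big_mkcond /= mulr_natl -sumr_const /deg.
  by apply: eq_bigl => u; rewrite inE.
rewrite (eq_bigr _ (fun v _ => L1 v)) pair_bigA /=.
rewrite big_mkcond /=.
rewrite (eq_bigr (fun p => (if p \in edges g then F p.1 else 0) + (if p \in edges g then F p.2 else 0))); last first.
  by move=> p _; case: (p \in edges g); rewrite ?addr0.
rewrite big_split /=.
rewrite [X in _ + X](reindex_inj (can_inj swap_pairK)) -big_split /=.
apply: eq_bigr => -[a b] _ /=; rewrite !inE /=.
case: (ltngtP a b) => [ab|ba|ab] /=.
- by rewrite addr0.
- by rewrite sym add0r.
- have -> : a = b by apply: val_inj.
  by rewrite irr addr0.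
Qed.
Lemma modS_small n u : (u < n)%N -> (u.+1 %% n = if u.+1 < n then u.+1 else 0)%N.
Proof.
move=> un; case: ltnP => h; first by rewrite modn_small.
have -> : u.+1 = n by lia.
by rewrite modnn.
Qed.

Lemma deg_cycle n (i : 'I_n) : (3 <= n)%N -> deg (@cycle_graph n) i = 2%N.
Proof.
move=> n3; have n0 : (0 < n)%N by lia.
have bn : ((if val i == 0%N then n.-1 else i.-1) < n)%N.
  have := ltn_ord i; case: ifP => _ ?; lia.
pose a : 'I_n := Ordinal (ltn_pmod i.+1 n0).
pose b : 'I_n := Ordinal bn.
rewrite /deg; have -> : [set u | cycle_graph i u] = [set a; b].
  apply/setP => u; rewrite !inE /cycle_graph -!val_eqE /=.
  have ui := ltn_ord u; have ii := ltn_ord i.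
  rewrite !modS_small //.
  congr orb; apply/eqP/eqP; repeat case: ifP; lia.
rewrite cards2; suff : a != b by move=> ->.
rewrite -val_eqE /=; have := ltn_ord i; rewrite modS_small //.
repeat case: ifP; lia.
Qed.

Lemma hs_nat n (g : rel 'I_n) : simple_graph g ->
  (2 * num_edges g = \sum_v deg g v)%N.
Proof.
move=> sg; apply/eqP; rewrite -(eqr_nat rat) natrM natr_sum.
have := @hs rat n g (fun _ => 1) sg.
rewrite sumr_const /num_edges => h; apply/eqP; rewrite mulr_natr.
rewrite -[RHS](eq_bigr _ (fun i _ => mulr1 _)) -h. done.
Qed.

Lemma cycle_simple n : (3 <= n)%N -> simple_graph (@cycle_graph n).
Proof.
move=> n3; split.
- move=> i; rewrite /cycle_graph !modS_small //; have := ltn_ord i.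
  by case: ifP => h1 h2; apply/negbTE; rewrite negb_or; apply/andP; split; apply/eqP; lia.

- by move=> i j; rewrite /cycle_graph orbC.
Qed.

Lemma cycle_conn n : (3 <= n)%N -> connected_graph (@cycle_graph n).
Proof.
move=> n3; have n0 : (0 < n)%N by lia.
have h0 (k : nat) (kn : (k < n)%N) : connect (@cycle_graph n) (Ordinal n0) (Ordinal kn).
  elim: k kn => [|k IH] kn.
    by rewrite (_ : Ordinal kn = Ordinal n0) ?connect0 //; apply: val_inj.
  have kn' : (k < n)%N by lia.
  apply: connect_trans (IH kn') _; apply: connect1.
  by rewrite /cycle_graph /= modn_small // eqxx.
have cs := sym_connect_sym (proj2 (@cycle_simple n n3)).
move=> u v; apply: (@connect_trans _ _ (Ordinal n0)).
  rewrite cs; have -> : u = Ordinal (ltn_ord u) by apply: val_inj.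
  exact: h0.
have -> : v = Ordinal (ltn_ord v) by apply: val_inj.
exact: h0.
Qed.

Lemma cycle_chem n : (3 <= n)%N -> chemical n (@cycle_graph n).
Proof.
move=> n3; have sg := @cycle_simple n n3; split => //.
- exact: (@cycle_conn n n3).
- apply/eqP; rewrite -(eqn_pmul2l (isT : (0 < 2)%N)) hs_nat //.
  rewrite (eq_bigr (fun _ => 2%N)); last by move=> i _; rewrite deg_cycle.
  by rewrite sum_nat_const card_ord mulnC.
- by move=> v; rewrite deg_cycle.
Qed.

Lemma span_bound n (g : rel 'I_n) (S : {set 'I_n}) :
  simple_graph g -> connected_graph g -> S != set0 ->
  (#|[set e in edges g | (e.1 \in S) && (e.2 \in S)]| + #|~: S| <= num_edges g)%N.
Proof.
case=> irr sym conn /set0Pn [s sS].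
pose step (X : {set 'I_n}) := X :|: [set y | [exists x in X, g x y]].
pose L k := iter k step S.
have ex v : exists k, v \in L k.
  apply: (@closedP n g (fun v => exists k, v \in L k) _ s v _ (conn s v)); last by exists 0%N.
  move=> x y [k xk] gxy; exists k.+1; rewrite /L iterS inE; apply/orP; right.
  by rewrite inE; apply/existsP; exists x; rewrite xk.
pose dist v := ex_minn (ex v).
have distP v k : v \in L k -> (dist v <= k)%N.
  by rewrite /dist; case: ex_minnP => m _ H /H.
have distin v : v \in L (dist v) by rewrite /dist; case: ex_minnP.
have parex v : v \notin S -> exists x, g v x && (dist x < dist v)%N.
  move=> vS; have := distin v; case E : (dist v) => [|k].
    by move=> vs; rewrite vs in vS.
  rewrite /L iterS inE => /orP [vk|].
    by have := distP _ _ vk; rewrite E ltnn.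
  rewrite inE => /existsP [x /andP [xk gxv]]; exists x.
  by rewrite sym gxv /= ltnS; apply: distP.
pose par v := odflt v [pick x | g v x && (dist x < dist v)%N].
have parP v : v \notin S -> g v (par v) && (dist (par v) < dist v)%N.
  move=> vS; rewrite /par; case: pickP => [x -> //|H].
  by case: (parex v vS) => x; rewrite H.
pose phi (v : 'I_n) := if (v < par v)%N then (v, par v) else (par v, v).
have key v w : phi v = phi w -> v = w \/ (v = par w /\ w = par v).
  rewrite /phi; case: ifP => _; case: ifP => _ [e1 e2]; by [left|right].
have phiinj : {in ~: S &, injective phi}.
  move=> v w; rewrite !inE => vS wS /key [//|[e1 e2]].
  have := parP _ vS; have := parP _ wS; rewrite -e1 -e2.
  move=> /andP[_ h1] /andP[_ h2]; have := ltn_trans h1 h2; by rewrite ltnn.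
have phiE v : v \notin S -> phi v \in edges g.
  move=> vS; have /andP[gp _] := parP _ vS; rewrite /phi inE.
  case: ifP => h /=; first by rewrite h gp.
  rewrite sym gp andbT ltn_neqAle leqNgt h andbT.
  apply/negP => /eqP /val_inj e; by rewrite e irr in gp.
have phiS v : v \notin S -> ~~ ((phi v).1 \in S) || ~~ ((phi v).2 \in S).
  by move=> vS; rewrite /phi; case: ifP => _ /=; rewrite vS ?orbT.
rewrite -(card_in_imset phiinj).
set A := [set e in edges g | _]; set B := [set phi x | x in ~: S].
have dj : [disjoint A & B].
  apply/pred0P => e /=; apply/negbTE; rewrite negb_and.
  case: (boolP (e \in B)) => [|_]; last by rewrite orbT.
  case/imsetP => v; rewrite inE => vS ->; rewrite inE negb_and.
  by rewrite negb_and phiS ?orbT.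
have [_] := leq_card_setU A B; rewrite dj => /eqP <-.
apply: subset_leq_card; apply/subsetP => e; rewrite inE => /orP [|].
  by rewrite inE => /andP [].
by case/imsetP => v; rewrite inE => vS ->; apply: phiE.
Qed.

Lemma pair2 (T : finType) (A : {set T}) x y z :
  #|A| = 2%N -> x \in A -> y \in A -> x != y -> z \in A -> z = x \/ z = y.
Proof.
move=> cA xA yA xy zA.
have : [set x; y] == A.
  rewrite eqEcard cA cards2 xy leqnn andbT.
  by apply/subsetP => u; rewrite !inE => /orP [] /eqP ->.
move/eqP => E; move: zA; rewrite -E !inE => /orP [] /eqP; by [left|right].
Qed.

Lemma modP_small n a : (a < n)%N ->
  ((a + n.-1) %% n = if a == 0 then n.-1 else a.-1)%N.
Proof.
case: a => [|a] an /=; first by rewrite add0n modn_small //; lia.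
have -> : (a.+1 + n.-1 = a + n)%N by lia.
by rewrite modnDr modn_small //; lia.
Qed.

Lemma two_reg_iso n (g : rel 'I_n) : (3 <= n)%N -> simple_graph g ->
  connected_graph g -> (forall v, deg g v = 2%N) -> isomorphic g (@cycle_graph n).
Proof.
move=> n3 [irr sym] conn d2; have n0 : (0 < n)%N by lia.
have N2 v x y z : g v x -> g v y -> x != y -> g v z -> z = x \/ z = y.
  move=> gx gy xy gz; have := d2 v; rewrite /deg => c.
  apply: (@pair2 _ [set u | g v u]) => //; by rewrite ?inE.
have othex b a : exists u, g b u && (u != a).
  have /cards2P [x [y [xy E]]] : #|[set u | g b u]| == 2%N by rewrite -/(deg g b) d2.
  have : x \in [set u | g b u] by rewrite E !inE eqxx.
  have : y \in [set u | g b u] by rewrite E !inE eqxx orbT.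
  rewrite !inE => gy gx.
  case: (eqVneq x a) => [xa|xa]; last by exists x; rewrite gx.
  by exists y; rewrite gy -xa eq_sym.
pose oth b a := odflt b [pick u | g b u && (u != a)].
have othP b a : g b (oth b a) && (oth b a != a).
  rewrite /oth; case: pickP => [x -> //|H].
  by case: (othex b a) => x; rewrite H.
pose v0 : 'I_n := Ordinal n0.
pose step (p : 'I_n * 'I_n) := (p.2, oth p.2 p.1).
pose pw k := iter k step (v0, oth v0 v0).
pose w k := (pw k).1.
have wS k : w k.+2 = oth (w k.+1) (w k) by [].
have F1 k : g (w k) (w k.+1).
  case: k => [|k]; first by case/andP: (othP v0 v0).
  by rewrite wS; case/andP: (othP (w k.+1) (w k)).
have F2 k : w k.+2 != w k by rewrite wS; case/andP: (othP (w k.+1) (w k)).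
have F3 k u : g (w k.+1) u -> u = w k \/ u = w k.+2.
  move=> gu; apply: N2 => //; first by rewrite sym.
  by rewrite eq_sym F2.
have Fne k : w k.+1 != w k.
  by apply/eqP => e; have := F1 k; rewrite -e irr.
have pig : exists j, [exists i : 'I_j, w i == w j] && (j <= n)%N.
  case: (boolP [exists i : 'I_n.+1, exists j : 'I_n.+1, (i < j)%N && (w i == w j)]).
    case/existsP => i /existsP [j /andP [ij /eqP e]]; exists j.
    rewrite -ltnS ltn_ord andbT; apply/existsP; exists (Ordinal ij); by rewrite e.
  move/existsPn => H.
  have : injective (fun k : 'I_n.+1 => (w k : 'I_n)).
    move=> i j /= e; apply: val_inj => /=.
    case: (ltngtP i j) => // [ij|ji].
      by have := existsPn (H i) j; rewrite ij e eqxx.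
    by have := existsPn (H j) i; rewrite ji e eqxx.
  by move/leq_card; rewrite !card_ord ltnn.
have pigex : exists j, [exists i : 'I_j, w i == w j].
  by case: pig => j /andP [h _]; exists j.
case: (ex_minnP pigex) => p pP pmin.
have pn : (p <= n)%N by case: pig => j /andP [h jn]; exact: leq_trans (pmin _ h) jn.
have distinct a b : (a < b)%N -> (b < p)%N -> w a != w b.
  move=> ab bp; apply/negP => /eqP e.
  have : (p <= b)%N by apply: pmin; apply/existsP; exists (Ordinal ab); rewrite e.
  by rewrite leqNgt bp.
have [p' pE] : exists p', p = p'.+1.
  by case/existsP: pP; case: (p) => [[]//|q] _ _; exists q.
have wp0 : w p = w 0.
  case/existsP: pP => -[i ip] /= /eqP e.
  case: i ip e => [//|i] ip e.
  have g1 : g (w i.+1) (w p') by rewrite e sym pE F1.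
  case: (F3 i _ g1) => e2.
  - have := distinct i p' (ltac:(lia)) (ltac:(lia)); by rewrite e2 eqxx.
  - case: (ltngtP i.+2 p') => h.
    + have := distinct i.+2 p' h (ltac:(lia)); by rewrite e2 eqxx.
    + have ep : p = i.+2 by lia.
      by have := Fne i.+1; rewrite -ep -e eqxx.
    + have ep : p = i.+3 by lia.
      by have := F2 i.+1; rewrite -ep -e eqxx.
have p3 : (3 <= p)%N.
  case: (ltnP 2 p) => // hp.
  have : p = 1%N \/ p = 2%N by lia.
  case=> ep; rewrite ep in wp0.
  - by have := Fne 0; rewrite wp0 eqxx.
  - by have := F2 0; rewrite wp0 eqxx.
have wp1 : w p.+1 = w 1.
  have gp : g (w 0) (w p.-1) by rewrite sym -wp0 -{2}(prednK (ltac:(lia) : (0 < p)%N)) F1.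
  have ne : w 1 != w p.-1 by apply: distinct; lia.
  have gp1 : g (w 0) (w p.+1) by rewrite -wp0 F1.
  case: (N2 _ _ _ _ (F1 0) gp ne gp1) => // e.
  have e' : (p.-1.+2 = p.+1)%N by lia.
  by have := F2 p.-1; rewrite e' e eqxx.
have pwE k : pw k = (w k, w k.+1).
  by rewrite /w /pw /=; case: (iter k step _).
have wper k : w (k + p)%N = w k.
  have : pw (k + p)%N = pw k.
    rewrite /pw iterD -/(pw p) pwE wp0 wp1 -pwE; done.
  by move=> e; rewrite /w e.
have p0 : (0 < p)%N by lia.
have wmod k : w k = w (k %% p)%N.
  rewrite {1}(divn_eq k p); elim: (k %/ p)%N => [|q IH]; first by rewrite mul0n add0n.
  by rewrite mulSnr addnAC wper.
have surj u : exists k, u = w k.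
  apply: (@closedP n g (fun u => exists k, u = w k) _ v0 u _ (conn v0 u)); last by exists 0%N.
  move=> x y [k ->] gy.
  have e : (((k + p).-1).+1 = k + p)%N by lia.
  have := F3 (k + p).-1 y; rewrite e wper => /(_ gy) [] ->; first by eexists.
  by eexists.
have winj a b : (a < p)%N -> (b < p)%N -> w a = w b -> a = b.
  move=> ap bp e; case: (ltngtP a b) => // h.
  - by have := distinct a b h bp; rewrite e eqxx.
  - by have := distinct b a h ap; rewrite e eqxx.
have np : (n <= p)%N.
  pose idx (u : 'I_n) : 'I_p := odflt (Ordinal p0) [pick k : 'I_p | u == w k].
  have idxP u : u = w (idx u).
    rewrite /idx; case: pickP => [k /eqP //|H].
    case: (surj u) => k e; have := H (Ordinal (ltn_pmod k p0)).
    by rewrite /= -wmod e eqxx.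
  have : injective idx by move=> u v e; rewrite (idxP u) (idxP v) e.
  by move/leq_card; rewrite !card_ord.
have epn : p = n by lia.
clear pE p'; subst p.
have key (a b : nat) : (a < n)%N -> (b < n)%N ->
    g (w a) (w b) = (b == a.+1 %% n)%N || (b == (a + n.-1) %% n)%N.
  move=> an bn; apply/idP/idP.
  - move=> gab; have e : (((a + n).-1).+1 = a + n)%N by lia.
    have := F3 (a + n).-1 (w b); rewrite e wper => /(_ gab) [] e2.
    + apply/orP; right; apply/eqP; apply: winj => //; first exact: ltn_pmod.
      by rewrite -wmod e2; congr w; lia.
    + apply/orP; left; apply/eqP; apply: winj => //; first exact: ltn_pmod.
      have e3 : (((a + n).-1).+2 = a.+1 + n)%N by lia.
      by rewrite -wmod e2 -addSn wper.
  - case/orP => /eqP ->; rewrite -wmod; first exact: F1.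
    have e : ((a + n.-1).+1 = a + n)%N by lia.
    by rewrite sym -(wper a) -e F1.
have finj : injective (fun i : 'I_n => w i).
  by move=> i j /= e; apply: val_inj; exact: (winj _ _ (ltn_ord i) (ltn_ord j) e).
exists (perm finj)^-1%g => i j.
suff H : forall a b : 'I_n, g (w a) (w b) = cycle_graph a b.
  by rewrite -{1}(permKV (perm finj) i) -{1}(permKV (perm finj) j) !permE H.
move=> a b; rewrite key // /cycle_graph.
have an := ltn_ord a; have bn := ltn_ord b.
congr orb; rewrite modS_small // modP_small //.
by apply/eqP/eqP; repeat case: ifP; lia.
Qed.

Definition Pt (a b i j : nat) : bool :=
  ((a == i) && (b == j)) || ((a == j) && (b == i)).

Definition kap {R : realFieldType} (c12 c13 c22 c23 c33 : R) (a b : nat) : R :=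
  (if Pt a b 1 2 then c12 else 0) + (if Pt a b 1 3 then c13 else 0)
  + (if Pt a b 2 2 then c22 else 0) + (if Pt a b 2 3 then c23 else 0)
  + (if Pt a b 3 3 then c33 else 0).

Definition cp {R : realFieldType} (x12 x13 x33 : R) (a b : nat) : R :=
  (if Pt a b 1 2 then x12 else 0) + (if Pt a b 1 3 then x13 else 0)
  + (if Pt a b 3 3 then x33 else 0).

Definition hh (R : realFieldType) (a : nat) : R :=
  if a == 1%N then -3 else if a == 2%N then 0 else 1.

Lemma kap_decomp (R : realFieldType) (c12 c13 c22 c23 c33 : R) a b :
  (1 <= a <= 3)%N -> (1 <= b <= 3)%N -> ~~ ((a == 1%N) && (b == 1%N)) ->
  kap c12 c13 c22 c23 c33 a b =
  c22 + cp (c12 - 4%:R * c22 + 3%:R * c23) (c13 - 3%:R * c22 + 2%:R * c23)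
           (c22 - 2%:R * c23 + c33) a b
  + (c23 - c22) * (hh R a + hh R b).
Proof.
rewrite /kap /cp /hh /Pt.
by case: a => [|[|[|[|a]]]] //; case: b => [|[|[|[|b]]]] //= _ _ _; ring.
Qed.

Lemma cp_bound (R : realFieldType) (x12 x13 x33 M : R) a b :
  (1 <= a <= 3)%N -> (1 <= b <= 3)%N -> ~~ ((a == 1%N) && (b == 1%N)) ->
  x12 <= M -> x13 <= M ->
  cp x12 x13 x33 a b <= M * ((a == 1%N)%:R + (b == 1%N)%:R)
     + x33 * ((a == 3%N) && (b == 3%N))%:R.
Proof.
rewrite /cp /Pt.
by case: a => [|[|[|[|a]]]] //; case: b => [|[|[|[|b]]]] //= _ _ _ h1 h2; lra.
Qed.

Lemma vert_id (R : realFieldType) a : (1 <= a <= 3)%N ->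
  a%:R * hh R a = 3%:R * ((a == 3%N)%:R - (a == 1%N)%:R)
  /\ a%:R - 2%:R = ((a == 3%N)%:R - (a == 1%N)%:R :> R)
  /\ a%:R * (a == 1%N)%:R = (a == 1%N)%:R :> R.
Proof.
rewrite /hh.
by case: a => [|[|[|[|a]]]] //= _; (split; [|split]); ring.
Qed.

Lemma fin_ineq (R : realFieldType) (M c x y : R) :
  M < 0 -> M + c < 0 -> 0 <= y -> y <= x ->
  M * x + c * y <= 0 /\ (0 < x -> M * x + c * y < 0).
Proof.
move=> h1 h2 h3 h4; case: (lerP c 0) => hc.
  split; [nra| move=> hx; nra].
split; [nra| move=> hx; nra].
Qed.

Lemma sum_cardE (R : realFieldType) (T : finType) (E : {set T}) (Q : pred T) (c : R) :
  c *+ #|[set p in E | Q p]| = \sum_(e in E) (if Q e then c else 0).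
Proof.
rewrite -big_mkcondr /= -sumr_const; apply: eq_bigl => e; by rewrite inE.
Qed.

Lemma sum_indV (R : realFieldType) (T : finType) (Q : pred T) :
  \sum_(v : T) (Q v)%:R = #|[set v | Q v]|%:R :> R.
Proof.
rewrite (eq_bigr (fun v => if Q v then 1 else 0)); last by move=> v _; case: (Q v).
rewrite -big_mkcond /= -sumr_const; apply: eq_bigl => v; by rewrite inE.
Qed.

Lemma sum_indE (R : realFieldType) (T : finType) (E : {set T}) (Q : pred T) :
  \sum_(e in E) (Q e)%:R = #|[set p in E | Q p]|%:R :> R.
Proof.
rewrite (@sum_cardE R T E Q 1); apply: eq_bigr => e _; by case: (Q e).
Qed.

Lemma topo_sum (R : realFieldType) (c12 c13 c22 c23 c33 : R) n (g : rel 'I_n) :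
  topo_index c12 c13 c22 c23 c33 g =
  \sum_(e in edges g) kap c12 c13 c22 c23 c33 (deg g e.1) (deg g e.2).
Proof.
rewrite /topo_index /mij !sum_cardE -!big_split /=.
by apply: eq_bigr => e _; rewrite /kap /Pt.
Qed.

Theorem corollary2 (R : realFieldType) (n : nat) (c12 c13 c22 c23 c33 : R) :
  (3 <= n)%N ->
  let c'12 := c12 - 4%:R * c22 + 3%:R * c23 in
  let c'13 := c13 - 3%:R * c22 + 2%:R * c23 in
  let c'33 := c22 - 2%:R * c23 + c33 in
  Num.max c'12 c'13 < Num.min 0 (- c'33) ->
  chemical n (@cycle_graph n) /\
  (forall g : rel 'I_n, chemical n g ->
     topo_index c12 c13 c22 c23 c33 g <= topo_index c12 c13 c22 c23 c33 (@cycle_graph n)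
     /\ (topo_index c12 c13 c22 c23 c33 g = topo_index c12 c13 c22 c23 c33 (@cycle_graph n) ->
         isomorphic g (@cycle_graph n))).
Proof.
move=> n3 c'12 c'13 c'33 hM.
have n0 : (0 < n)%N by lia.
have chC := @cycle_chem n n3.
split => //.
have IC : topo_index c12 c13 c22 c23 c33 (@cycle_graph n) = c22 *+ n.
  rewrite topo_sum (eq_bigr (fun _ => c22)); last first.
    by move=> e _; rewrite !deg_cycle // /kap /Pt /= !addr0 add0r.
  by case: chC => _ _ ne _; rewrite sumr_const -/(num_edges _) ne.
move=> g [sg conn ne d3].
have dge1 v : (1 <= deg g v)%N.
  have [u uv] : exists u : 'I_n, u != v.
    exists (Ordinal (ltn_pmod v.+1 n0)); rewrite -val_eqE /= modS_small //.
    have := ltn_ord v; case: ifP => ? ?; apply/eqP; lia.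
  case/connectP: (conn v u) => -[|x p] /=; first by move=> _ e; rewrite e eqxx in uv.
  case/andP => gvx _ _; apply/card_gt0P; exists x; by rewrite inE.
have drng v : (1 <= deg g v <= 3)%N by rewrite dge1 d3.
have no11 u v : g u v -> deg g u = 1%N -> deg g v = 1%N -> False.
  move=> guv du dv.
  have one (x y : 'I_n) (A : {set 'I_n}) : #|A| = 1%N -> x \in A -> y \in A -> x = y.
    by move/eqP/cards1P => [z ->]; rewrite !inE => /eqP -> /eqP ->.
  have cl : forall x y, (x = u \/ x = v) -> g x y -> (y = u \/ y = v).
    move=> x y [] -> gy.
    - by right; apply: (one _ _ [set z | g u z]) du _ _; rewrite inE.
    - left; apply: (one _ _ [set z | g v z]) dv _ _; rewrite inE //.
      by rewrite (proj2 sg).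
  have [w /andP[wu wv]] : exists w : 'I_n, (w != u) && (w != v).
    have c2 : (#|[set u; v]| <= 2)%N by rewrite cards2; case: (u != v).
    have : (0 < #|~: [set u; v]|)%N by have := cardsC [set u; v]; rewrite card_ord; lia.
    case/card_gt0P => w; rewrite !inE negb_or => ?; by exists w.
  have := @closedP n g (fun x => x = u \/ x = v) cl u w (or_introl erefl) (conn u w).
  by case=> e; [rewrite e eqxx in wu | rewrite e eqxx in wv].
have eok e : e \in edges g -> ~~ ((deg g e.1 == 1%N) && (deg g e.2 == 1%N)).
  rewrite inE => /andP [_ ge]; apply/negP => /andP [/eqP h1 /eqP h2].
  exact: no11 _ _ ge h1 h2.
have Isum : topo_index c12 c13 c22 c23 c33 g =
    c22 *+ n + \sum_(e in edges g) cp c'12 c'13 c'33 (deg g e.1) (deg g e.2).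
  rewrite topo_sum (eq_bigr _ (fun e (he : e \in edges g) => @kap_decomp R c12 c13 c22 c23 c33 _ _ (drng e.1) (drng e.2) (eok e he) : kap c12 c13 c22 c23 c33 (deg g e.1) (deg g e.2) = _)).
  rewrite !big_split /= sumr_const -/(num_edges g) ne -mulr_sumr.
  have hz : \sum_(e in edges g) (hh R (deg g e.1) + hh R (deg g e.2)) = 0.
    rewrite (@hs R n g (fun v => hh R (deg g v)) sg).
    rewrite (eq_bigr _ (fun v _ => proj1 (@vert_id R _ (drng v)))) -mulr_sumr.
    rewrite (eq_bigr _ (fun v _ => esym (proj1 (proj2 (@vert_id R _ (drng v)))))).
    rewrite sumrB -natr_sum -(@hs_nat n g sg) ne sumr_const card_ord.
    by rewrite natrM mulr_natr subrr mulr0.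
  by rewrite hz mulr0 addr0.
set M := Num.max c'12 c'13.
have hm12 : c'12 <= M by rewrite le_max lexx.
have hm13 : c'13 <= M by rewrite le_max lexx orbT.
have [hm1 hm2] : M < 0 /\ M + c'33 < 0.
  move: hM; rewrite lt_min => /andP [h1 h2]; move: h1 h2; rewrite -/M => h1 h2; split; lra.
set n1 := #|[set v | deg g v == 1%N]|.
set n3' := #|[set v | deg g v == 3%N]|.
set B := #|[set e in edges g | (deg g e.1 == 3%N) && (deg g e.2 == 3%N)]|.
have Sb : \sum_(e in edges g) cp c'12 c'13 c'33 (deg g e.1) (deg g e.2)
    <= M * n1%:R + c'33 * B%:R.
  apply: le_trans (ler_sum _ (fun e (he : e \in edges g) =>
     @cp_bound R c'12 c'13 c'33 M _ _ (drng e.1) (drng e.2) (eok e he) hm12 hm13)) _.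
  rewrite big_split /= -!mulr_sumr sum_indE.
  rewrite (@hs R n g (fun v => (deg g v == 1%N)%:R) sg).
  rewrite (eq_bigr _ (fun v _ => proj2 (proj2 (@vert_id R _ (drng v))))).
  by rewrite sum_indV.
have n31 : n3' = n1.
  have : \sum_v ((deg g v)%:R - 2%:R) = 0 :> R.
    rewrite sumrB -natr_sum -(@hs_nat n g sg) ne sumr_const card_ord.
    by rewrite natrM mulr_natr subrr.
  rewrite (eq_bigr _ (fun v _ => proj1 (proj2 (@vert_id R _ (drng v))))).
  by rewrite sumrB !sum_indV => /eqP; rewrite subr_eq0 eqr_nat => /eqP.
have Bn3 : (B <= n3')%N.
  set S := [set v | deg g v == 3%N].
  have BS : [set e in edges g | (deg g e.1 == 3%N) && (deg g e.2 == 3%N)] =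
            [set e in edges g | (e.1 \in S) && (e.2 \in S)].
    by apply/setP => e; rewrite !inE.
  case: (eqVneq S set0) => [S0|SN0].
    suff -> : B = 0%N by [].
    rewrite /B BS; apply/eqP; rewrite cards_eq0; apply/eqP/setP => e.
    rewrite !inE; apply/negbTE; apply/negP => /and3P [_ h _].
    have : e.1 \in S by rewrite inE.
    by rewrite S0 inE.
  have := @span_bound n g S sg conn SN0; rewrite -BS -/B ne.
  have := cardsC S; rewrite card_ord -/n3'; move: #|~: S| => k; clear -k; lia.
have [H1 H2] := @fin_ineq R M c'33 n1%:R B%:R hm1 hm2 (ler0n _ _)
   (ltac:(by rewrite ler_nat; rewrite -n31)).
split.
  by rewrite Isum IC gerDl; apply: le_trans Sb H1.
rewrite Isum IC => /eqP; rewrite -subr_eq0 addrC addKr => /eqP S0.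
have n10 : n1 = 0%N.
  case: (posnP n1) => // h; have := H2 (ltac:(by rewrite ltr0n)).
  by rewrite ltNge -S0 Sb.
apply: two_reg_iso => // v.
have : v \notin [set v | deg g v == 1%N].
  apply/negP => h; have : (0 < n1)%N by apply/card_gt0P; exists v.
  by rewrite n10.
have : v \notin [set v | deg g v == 3%N].
  apply/negP => h; have : (0 < n3')%N by apply/card_gt0P; exists v.
  by rewrite n31 n10.
rewrite !inE; have := drng v; lia.
Qed.
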